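(* For $n$ a power of 2, for all but an $o(1)$ fraction (as $n\to\infty$) of the sets $A\subseteq\{0,1\}^{\log n}$ with $|A|=n/2$, every classical probabilistic property tester for $P_A=\{x\in\{0,1\}^n:\exists y\in A,\ x=h(y)\}$ with distance parameter $1/3$ (even allowing two-sided error) makes $\Omega(\log n)$ queries.
   Context: Logarithms are base 2. Positions $i\in\{1,\dots,n\}$ are identified with vectors in $\mathbb{F}_2^{\log n}$; the Hadamard code of $y\in\{0,1\}^{\log n}$ is $h(y)\in\{0,1\}^n$ with $h(y)_i=y\cdot i$ over $\mathbb{F}_2$. For $P\subseteq\{0,1\}^n$, $x$ is $\epsilon$-far from $P$ if it differs from every element of $P$ in more than $\epsilon n$ positions. A classical property tester for $P$ with distance parameter $\epsilon$ is a probabilistic (possibly adaptive) algorithm with query access to the bits of $x$ that accepts every $x\in P$ with probability at least $2/3$ and every $x$ that is $\epsilon$-far from $P$ with probability at most $1/3$; its complexity is the number of queries. *)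

(* Defs.v *)
From HB Require Import structures.
From mathcomp Require Import all_boot all_order all_algebra.
From mathcomp Require Import reals.
Set Implicit Arguments. Unset Strict Implicit. Unset Printing Implicit Defensive.
Import Order.TTheory GRing.Theory Num.Theory.
Local Open Scope ring_scope.

(* Vectors of F_2^k, k = log n; positions of an n-bit string, n = 2^k,
   are identified with such vectors. *)
Definition vec (k : nat) := {ffun 'I_k -> bool}.

Definition word (k : nat) := {ffun vec k -> bool}.

Definition dotF2 (k : nat) (y i : vec k) : bool :=
  \big[addb/false]_(j < k) (y j && i j).

Definition hadamard (k : nat) (y : vec k) : word k := [ffun i => dotF2 y i].

Definition PA (k : nat) (A : {set vec k}) (x : word k) : Prop :=
  exists2 y, y \in A & x = hadamard y.

Definition hdist (k : nat) (x z : word k) : nat := #|[set i | x i != z i]|.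

Definition far (R : realFieldType) (k : nat) (P : word k -> Prop) (eps : R) (x : word k) : Prop :=
  forall z, P z -> eps * (2 ^ k)%:R < (hdist x z)%:R.

(* Deterministic adaptive query algorithms = decision trees *)
Inductive dtree (I : Type) : Type :=
| Leaf of bool
| Query of I & dtree I & dtree I.
Arguments Leaf {I} b.
Arguments Query {I} i t0 t1.

Fixpoint run (I : Type) (t : dtree I) (x : I -> bool) : bool :=
  match t with
  | Leaf b => b
  | Query i t0 t1 => if x i then run t1 x else run t0 x
  end.

Fixpoint depth (I : Type) (t : dtree I) : nat :=
  match t with
  | Leaf _ => 0
  | Query _ t0 t1 => (maxn (depth t0) (depth t1)).+1
  end.

(* Probabilistic (adaptive) query algorithm: a probability distribution
   (finitely supported; the set of trees of bounded depth is finite) over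
   deterministic decision trees. *)
Record prob_alg (R : realFieldType) (I : Type) := ProbAlg {
  pa_supp : seq (R * dtree I);
  pa_nonneg : all (fun p => 0 <= p.1) pa_supp;
  pa_sum1 : \sum_(p <- pa_supp) p.1 = 1 }.

Definition acc_prob (R : realFieldType) (I : Type) (T : prob_alg R I) (x : I -> bool) : R :=
  \sum_(p <- pa_supp T | run p.2 x) p.1.

Definition query_cplx (R : realFieldType) (I : Type) (T : prob_alg R I) : nat :=
  \max_(p <- pa_supp T) depth p.2.

Definition is_tester (R : realFieldType) (k : nat) (P : word k -> Prop) (eps : R)
    (T : prob_alg R (vec k)) : Prop :=
  (forall x : word k, P x -> 2 / 3 <= acc_prob T x) /\
  (forall x : word k, far P eps x -> acc_prob T x <= 1 / 3).

(* Main.v *)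
Require Import Defs.
From HB Require Import structures.
From mathcomp Require Import all_boot all_order all_algebra.
From mathcomp Require Import reals.
From mathcomp Require Import zify ring lra.
Import Order.TTheory GRing.Theory Num.Theory.
Set Implicit Arguments. Unset Strict Implicit. Unset Printing Implicit Defensive.

Lemma bin_step n i : i.+1 <= n - i -> 'C(n, i) <= 'C(n, i.+1).
Proof.
move=> h.
have e := mul_bin_left n i.
have : i.+1 * 'C(n, i) <= i.+1 * 'C(n, i.+1).
  rewrite e; exact: leq_mul.
by rewrite leq_pmul2l.
Qed.



Lemma bin_mono n d i : i + d = n./2 -> 'C(n, i) <= 'C(n, n./2).
Proof.
elim: d i => [|d IH] i h; first by rewrite -h addn0.
apply: leq_trans (IH i.+1 _); last by rewrite addSnnS.
apply: bin_step.
have := odd_double_half n. rewrite -addnn. case: (odd n); lia.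
Qed.

Lemma bin_le_mid n i : 'C(n, i) <= 'C(n, n./2).
Proof.
case: (leqP i n./2) => hi.
  by apply: (@bin_mono n (n./2 - i)); lia.
case: (leqP i n) => hin; last by rewrite bin_small.
rewrite -bin_sub //; apply: (@bin_mono n (n./2 - (n - i))).
have := odd_double_half n. rewrite -addnn. case: (odd n); lia.
Qed.

Lemma central_bin n : 2 ^ n <= n.+1 * 'C(n, n./2).
Proof.
have -> : 2 ^ n = \sum_(i < n.+1) 'C(n, i).
  rewrite -[2]/(1 + 1) expnDn; apply: eq_bigr => i _; by rewrite !exp1n !muln1.
apply: (@leq_trans (\sum_(i < n.+1) 'C(n, n./2))); first by apply: leq_sum => i _; apply: bin_le_mid.
by rewrite sum_nat_const card_ord.
Qed.

Lemma sum3 n : 3 ^ n = \sum_(i < n.+1) 'C(n, i) * 2 ^ (n - i).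
Proof.
rewrite -[3]/(2 + 1) expnDn; apply: eq_bigr => i _; by rewrite exp1n muln1.
Qed.

Lemma card_small (T : finType) m :
  #|[set D : {set T} | #|D| <= m]| = \sum_(d < m.+1) 'C(#|T|, d).
Proof.
elim: m => [|m IH].
  rewrite big_ord1 -card_draws; apply: eq_card => D; by rewrite !inE leqn0.
rewrite big_ord_recr /= -IH -card_draws.
have -> : [set D : {set T} | #|D| <= m.+1] =
   [set D : {set T} | #|D| <= m] :|: [set D : {set T} | #|D| == m.+1].
  apply/setP => D; rewrite !inE leq_eqVlt ltnS orbC.
  done.
rewrite cardsU.
have -> : [set D : {set T} | #|D| <= m] :&: [set D : {set T} | #|D| == m.+1] = set0.
  apply/setP => D; rewrite !inE; case: (#|D| =P m.+1) => [->|]; [by rewrite ltnn | by rewrite andbF].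
by rewrite cards0 subn0.
Qed.

Lemma small_bound (T : finType) m : m <= #|T| ->
  #|[set D : {set T} | #|D| <= m]| * 2 ^ (#|T| - m) <= 3 ^ #|T|.
Proof.
move=> hm; rewrite card_small sum3 big_distrl /=.
rewrite (@big_ord_widen _ _ _ _ (#|T|.+1) (fun i => 'C(#|T|, i) * 2 ^ (#|T| - m))) ?ltnS //.
rewrite big_mkcond /=; apply: leq_sum => i _.
case: ifP => // hi; apply: leq_mul => //; rewrite leq_pexp2l //; lia.
Qed.

Lemma pow_lin j : 2 * j + 2 <= 2 ^ j.+1.
Proof. elim: j => // j IH; rewrite expnS; lia. Qed.

Lemma key k : 40 <= k ->
  3 * (2 * k + 1) + 6 * (k.+1 * 2 ^ ((k.-1) %/ 8)) <= 2 ^ (k - 3).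
Proof.
move=> hk; set q := (k.-1) %/ 8.
have h1 : k.+1 <= 2 ^ (k %/ 2).+1 by have := pow_lin (k %/ 2); lia.
have h2 : 2 ^ (k %/ 2).+1 * 2 ^ q * 2 ^ 4 <= 2 ^ (k - 3).
  rewrite -!expnD leq_exp2l //; rewrite /q; lia.
have h3 : 0 < 2 ^ q by rewrite expn_gt0.
have h4 : k.+1 * 2 ^ q <= 2 ^ (k %/ 2).+1 * 2 ^ q by rewrite leq_mul2r h1 orbT.
have h5 : k.+1 <= k.+1 * 2 ^ q by rewrite -{1}(muln1 k.+1) leq_mul2l h3 orbT.
rewrite (_ : 2 ^ 4 = 16) // in h2.
lia.
Qed.

Lemma card_ct_rec (f : nat -> nat) k : f 0 = 2 -> (forall q, f q.+1 = 2 ^ k * f q ^ 2) ->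
  forall q, f q <= 2 ^ (k.+1 * 2 ^ q.+1).
Proof.
move=> f0 fS.
suff H : forall q, f q <= 2 ^ (k.+1 * (2 ^ q.+1 - 1)).
  move=> q; apply: leq_trans (H q) _; rewrite leq_exp2l //; apply: leq_mul => //; exact: leq_subr.
elim=> [|q IH]; first by rewrite f0 expn1 muln1 -{1}(expn1 2) leq_exp2l.
rewrite fS; apply: leq_trans (_ : 2 ^ k * (2 ^ (k.+1 * (2 ^ q.+1 - 1))) ^ 2 <= _).
  by rewrite leq_mul2l leq_exp2r // IH orbT.
rewrite -expnM -expnD leq_exp2l //.
have := expn_gt0 2 q.+1; rewrite (expnS 2 q.+1); move: (2 ^ q.+1) => X hX.
rewrite /=; nia.
Qed.

Lemma c827 : 2 * 27 ^ 8 <= 32 ^ 8.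
Proof. rewrite !expnS expn0. lia. Qed.

Lemma numeric k M F S : 40 <= k -> 0 < M <= k ->
  F <= 2 ^ (k.+1 * 2 ^ ((k.-1) %/ 8).+1) ->
  S * 2 ^ (2 ^ k - 2 ^ k %/ 3) <= 3 ^ (2 ^ k) ->
  M * (F * S) <= 'C(2 ^ k, (2 ^ k)./2).
Proof.
move=> hk /andP[M0 Mk] hF hS.
set N := 2 ^ k in hS *; set q := (k.-1) %/ 8 in hF.
have hN8 : N = 8 * 2 ^ (k - 3).
  by rewrite /N -[8]/(2 ^ 3) -expnD subnKC //; lia.
suff H : M * (F * S) * N.+1 <= 2 ^ N.
  rewrite -(@leq_pmul2r N.+1) //; apply: leq_trans H _.
  by rewrite mulnC central_bin.
rewrite -(@leq_exp2r _ _ 3) //.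
rewrite -(@leq_pmul2r (4 ^ N)) ?expn_gt0 //.
have hS3 : S ^ 3 * 4 ^ N <= 27 ^ N.
  apply: leq_trans (_ : (S * 2 ^ (N - N %/ 3)) ^ 3 <= _); last first.
    by rewrite -[27]/(3 ^ 3) expnAC leq_exp2r.
  rewrite expnMn leq_mul2l; apply/orP; right.
  rewrite -expnM -[4]/(2 ^ 2) -expnM leq_exp2l //; lia.
set P := M * F * N.+1.
have -> : (M * (F * S) * N.+1) ^ 3 * 4 ^ N = P ^ 3 * (S ^ 3 * 4 ^ N).
  by rewrite /P !expnMn; ring.
apply: leq_trans (_ : P ^ 3 * 27 ^ N <= _); first by rewrite leq_mul2l hS3 orbT.
have -> : (2 ^ N) ^ 3 * 4 ^ N = (32 ^ 8) ^ (2 ^ (k - 3)).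
  rewrite -(expnM 32) -hN8 -(expnM 2 N 3) -[4]/(2 ^ 2) -(expnM 2 2) -expnD -[32]/(2 ^ 5) -expnM; congr (_ ^ _); lia.
apply: leq_trans (_ : (2 * 27 ^ 8) ^ (2 ^ (k - 3)) <= _); last by rewrite leq_exp2r; [exact: c827 | rewrite expn_gt0].
rewrite expnMn -(expnM 27) -hN8 leq_mul2r; apply/orP; right.
have hM : M <= 2 ^ k by apply: leq_trans Mk (ltnW (ltn_expl _ _)).
have hN1 : N.+1 <= 2 ^ k.+1.
  by rewrite expnS; have := expn_gt0 2 k; rewrite /N; lia.
have hP : P <= 2 ^ (k + k.+1 * 2 ^ q.+1 + k.+1).
  apply: leq_trans (_ : 2 ^ k * 2 ^ (k.+1 * 2 ^ q.+1) * 2 ^ k.+1 <= _).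
    by rewrite /P; apply: leq_mul; [apply: leq_mul|].
  by rewrite -!expnD.
apply: leq_trans (_ : (2 ^ (k + k.+1 * 2 ^ q.+1 + k.+1)) ^ 3 <= _).
  by rewrite leq_exp2r.
rewrite -expnM leq_exp2l //.
have := key hk; rewrite -/q expnS; lia.
Qed.

Fixpoint ctree (k q : nat) : finType :=
  match q with 0 => bool | q'.+1 => (vec k * ctree k q' * ctree k q')%type end.

Fixpoint crun (k q : nat) : ctree k q -> (vec k -> bool) -> bool :=
  match q return ctree k q -> (vec k -> bool) -> bool with
  | 0 => fun b _ => b
  | q'.+1 => fun t x => if x t.1.1 then crun t.2 x else crun t.1.2 x end.

Lemma card_ctree k q : #|ctree k q.+1| = #|vec k| * #|ctree k q| ^ 2.
Proof. by rewrite /= !card_prod mulnA. Qed.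
Lemma card_ctree0 k : #|ctree k 0| = 2.
Proof. by rewrite /= card_bool. Qed.

Lemma dtree_to_ctree k q (t : dtree (vec k)) : (depth t <= q)%N ->
  exists c : ctree k q, forall x, crun c x = run t x.
Proof.
elim: q t => [|q IH] t.
  by case: t => [b|i t0 t1] //= _; exists b.
case: t => [b|i t0 t1] /= h.
  have [c hc] := IH (Leaf b) isT.
  exists ([ffun => false], c, c) => x /=; by rewrite !hc; case: ifP.
have [h0 h1] : (depth t0 <= q)%N /\ (depth t1 <= q)%N.
  by move: h; rewrite ltnS geq_max => /andP.
have [c0 hc0] := IH t0 h0; have [c1 hc1] := IH t1 h1.
by exists (i, c0, c1) => x /=; rewrite hc0 hc1.
Qed.

Lemma card_vec k : #|vec k| = 2 ^ k.
Proof. by rewrite card_ffun card_bool card_ord. Qed.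

Definition vxor k (y z : vec k) : vec k := [ffun j => y j (+) z j].

Lemma dot_add k (y z i : vec k) : dotF2 y i (+) dotF2 z i = dotF2 (vxor y z) i.
Proof.
rewrite /dotF2 -big_split /=; apply: eq_bigr => j _; rewrite ffunE.
by case: (y j); case: (z j); case: (i j).
Qed.

Definition flip k (j0 : 'I_k) (i : vec k) : vec k :=
  [ffun j => if j == j0 then ~~ i j else i j].

Lemma flipK k j0 : involutive (@flip k j0).
Proof. move=> i; apply/ffunP => j; rewrite !ffunE; by case: (j == j0); rewrite ?negbK. Qed.

Lemma dot_flip k (w : vec k) j0 i : w j0 -> dotF2 w (flip j0 i) = ~~ dotF2 w i.
Proof.
move=> wj; rewrite /dotF2 (bigD1 j0) //= (bigD1 j0 (P := predT)) //= ffunE eqxx wj /=.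
have -> : \big[addb/false]_(i0 < k | i0 != j0) (w i0 && flip j0 i i0) =
          \big[addb/false]_(i0 < k | i0 != j0) (w i0 && i i0).
  by apply: eq_bigr => j hj; rewrite ffunE (negbTE hj).
by case: (i j0); case: (\big[addb/false]_(i0 < k | i0 != j0) (w i0 && i i0)).
Qed.

Lemma hdist_had k (y z : vec k) : y != z -> 2 * hdist (hadamard y) (hadamard z) = 2 ^ k.
Proof.
move=> yz.
have [j0 hj0] : exists j0, vxor y z j0.
  case: (pickP (fun j => vxor y z j)) => [j hj|h]; first by exists j.
  exfalso; move/negP: yz; apply; apply/eqP/ffunP => j.
  by have := h j; rewrite ffunE; case: (y j); case: (z j).
set w := vxor y z in hj0.
have -> : hdist (hadamard y) (hadamard z) = #|[set i | dotF2 w i]|.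
  apply: eq_card => i; rewrite !inE !ffunE -dot_add.
  by case: (dotF2 y i); case: (dotF2 z i).
have e : #|[set i | ~~ dotF2 w i]| = #|[set i | dotF2 w i]|.
  rewrite -(card_preimset _ (inv_inj (flipK j0))); apply: eq_card => i.
  by rewrite !inE dot_flip // negbK.
rewrite -card_vec -(cardsC [set i | dotF2 w i]) mul2n -addnn; congr (_ + _).
by rewrite -e; apply: eq_card => i; rewrite !inE.
Qed.

Section RealPart.
Local Open Scope ring_scope.
Lemma avg_aux (R : realFieldType) (X : Type) (s : seq (R * X)) (f : R * X -> R) a :
  all (fun p => 0 <= p.1) s -> all (fun p => f p < a) s ->
  \sum_(p <- s) p.1 * f p <= a * \sum_(p <- s) p.1 /\
  (0 < \sum_(p <- s) p.1 -> \sum_(p <- s) p.1 * f p < a * \sum_(p <- s) p.1).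
Proof.
elim: s => [|p s IH] /=; first by rewrite !big_nil mulr0 ltxx.
move=> /andP[w0 hs] /andP[fa hf]; have [IHw IHs] := IH hs hf.
rewrite !big_cons mulrDr; split.
  by apply: lerD => //; rewrite mulrC; apply: ler_wpM2r => //; exact: ltW.
move=> hpos; case: (ltrP 0 p.1) => hw.
  apply: ltr_leD => //; by rewrite mulrC ltr_pM2r.
have e : p.1 = 0 by apply/eqP; rewrite eq_le hw w0.
rewrite e mul0r mulr0 !add0r; apply: IHs; by move: hpos; rewrite e add0r.
Qed.

Lemma avg (R : realFieldType) (X : Type) (s : seq (R * X)) (f : R * X -> R) a :
  all (fun p => 0 <= p.1) s -> \sum_(p <- s) p.1 = 1 ->
  a <= \sum_(p <- s) p.1 * f p -> has (fun p => a <= f p) s.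
Proof.
move=> h0 h1 ha; apply/negPn/negP; rewrite -all_predC => hall.
have : all (fun p => f p < a) s.
  by apply: sub_all hall => p /=; rewrite -ltNge.
move=> /(avg_aux h0) [_ /(_ _)]; rewrite h1 mulr1 ltr01 => /(_ isT).
by rewrite ltNge ha.
Qed.

Lemma exch (R : realFieldType) k (T : prob_alg R (vec k)) (B : {set vec k}) :
  \sum_(y in B) acc_prob T (hadamard y) =
  \sum_(p <- pa_supp T) p.1 * #|[set y | (y \in B) && run p.2 (hadamard y)]|%:R.
Proof.
rewrite /acc_prob.
under eq_bigr => y _ do rewrite big_mkcond /=.
rewrite exchange_big /=; apply: eq_bigr => p _.
rewrite -big_mkcondr /=.
rewrite (eq_bigl (fun y => y \in [set y | (y \in B) && run p.2 (hadamard y)])); last first.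
  by move=> y; rewrite inE.
by rewrite sumr_const mulr_natr.
Qed.

Lemma has_all (X : Type) (P Q : pred X) s : has P s -> all Q s -> has (fun x => P x && Q x) s.
Proof. elim: s => //= x s IH /orP[hp|hs] /andP[hq ha]; first by rewrite hp hq. by rewrite IH ?orbT. Qed.

Lemma all_depth (R : Type) (I : Type) (s : seq (R * dtree I)) :
  all (fun p => depth p.2 <= \max_(p0 <- s) depth p0.2)%N s.
Proof.
elim: s => //= p s IH; rewrite big_cons leq_maxl /=.
apply: sub_all IH => p' h /=; exact: leq_trans h (leq_maxr _ _).
Qed.


Lemma tester_tree (R : realFieldType) k (A : {set vec k}) (T : prob_alg R (vec k)) :
  (0 < k)%N -> #|A| = (2 ^ k)./2 -> is_tester (PA A) (1 / 3) T ->
  has (fun p => (2 ^ k + 6 * #|[set y | (y \in ~:A) && run p.2 (hadamard y)]|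
          <= 6 * #|[set y | (y \in A) && run p.2 (hadamard y)]|)%N
        && (depth p.2 <= query_cplx T)%N) (pa_supp T).
Proof.
move=> k0 hA [tin tout].
set N := (2 ^ k)%N.
have hN : (N = N./2 + N./2)%N.
  have := odd_double_half N; rewrite /N oddX (negbTE (lt0n_neq0 k0)) /= add0n -addnn.
  by move=> ->.
have hAc : #|~:A| = N./2.
  have := cardsC A; rewrite card_vec -/N hA; lia.
have hin : forall y, y \in A -> 2 / 3 <= acc_prob T (hadamard y).
  by move=> y hy; apply: tin; exists y.
have hout : forall y, y \in ~:A -> acc_prob T (hadamard y) <= 1 / 3.
  move=> y; rewrite inE => hy; apply: tout => z [y' hy' ->].
  have yy : y != y' by apply: contraNneq hy => ->.
  have := hdist_had yy; rewrite -/N; set d := hdist _ _ => hd.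
  have d0 : (0 < d)%N by have := expn_gt0 2 k; rewrite -/N -hd; lia.
  rewrite -hd natrM; have : (0 : R) < d%:R by rewrite ltr0n.
  move=> hd0; lra.
have SA : (N./2)%:R * (2 / 3) <= \sum_(p <- pa_supp T) p.1 *
      #|[set y | (y \in A) && run p.2 (hadamard y)]|%:R.
  rewrite -(exch T A) -hA mulr_natl -sumr_const.
  by apply: ler_sum => y hy; exact: hin.
have SB : \sum_(p <- pa_supp T) p.1 *
      #|[set y | (y \in ~:A) && run p.2 (hadamard y)]|%:R <= (N./2)%:R * (1 / 3).
  rewrite -(exch T (~:A)) -hAc mulr_natl -sumr_const.
  by apply: ler_sum => y hy; exact: hout.
set a := (N./2)%:R / 3 : R.
have H : a <= \sum_(p <- pa_supp T) p.1 *
    (#|[set y | (y \in A) && run p.2 (hadamard y)]|%:R -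
     #|[set y | (y \in ~:A) && run p.2 (hadamard y)]|%:R).
  under eq_bigr => p _ do rewrite mulrBr.
  rewrite sumrB; move: SA SB; rewrite /a.
  move: (\sum_(p <- _) _) (\sum_(p <- _) _) ((N./2)%:R) => X Y Z; lra.
have := has_all (avg (pa_nonneg T) (pa_sum1 T) H) (all_depth (pa_supp T)).
apply: sub_has => p /andP[h1 h2]; rewrite h2 andbT.
move: h1; rewrite /a ler_pdivrMr ?ltr0Sn //.
set u := #|[set y in A | _]|; set v := #|[set y in ~: A | _]| => h1.
have : (N./2 + 3 * v <= 3 * u)%N.
  rewrite -(ler_nat R) natrD !natrM; move: h1.
  move: (u%:R) (v%:R) ((N./2)%:R) => X Y Z; lra.
lia.
Qed.

End RealPart.

Definition symd (T : finType) (A S : {set T}) := (A :\: S) :|: (S :\: A).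

Lemma symdK (T : finType) (A S : {set T}) : symd S (symd A S) = A.
Proof.
apply/setP => x; rewrite !inE.
by case: (x \in A); case: (x \in S).
Qed.

Definition cacc k q (t : ctree k q) : {set vec k} := [set y | crun t (hadamard y)].

Definition Bad k : {set {set vec k}} :=
  [set A : {set vec k} | [exists t : ctree k ((k.-1) %/ 8),
     #|symd A (cacc t)| <= (2 ^ k) %/ 3]].

Lemma card_Bad k : #|Bad k| <=
  #|ctree k ((k.-1) %/ 8)| * #|[set D : {set vec k} | #|D| <= (2 ^ k) %/ 3]|.
Proof.
set q := (k.-1) %/ 8; set Ds := [set D : {set vec k} | _].
have sub : Bad k \subset
   [set symd (cacc p.1) p.2 | p in setX [set: ctree k q] Ds].
  apply/subsetP => A; rewrite inE => /existsP[t ht].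
  apply/imsetP; exists (t, symd A (cacc t)); first by rewrite !inE /= ht.
  by rewrite /= symdK.
apply: leq_trans (subset_leq_card sub) _.
by apply: leq_trans (leq_imset_card _ _) _; rewrite cardsX cardsT.
Qed.

Lemma card_ct k q : #|ctree k q| <= 2 ^ (k.+1 * 2 ^ q.+1).
Proof.
apply: (@card_ct_rec (fun q => #|ctree k q|)) => [|q']; first exact: card_ctree0.
by rewrite card_ctree card_vec.
Qed.

Lemma bad_count k M : 40 <= k -> 0 < M <= k ->
  M * #|Bad k| <= 'C(2 ^ k, (2 ^ k)./2).
Proof.
move=> hk hM.
apply: leq_trans (_ : M * (#|ctree k ((k.-1) %/ 8)| *
   #|[set D : {set vec k} | #|D| <= (2 ^ k) %/ 3]|) <= _).
  by rewrite leq_mul2l card_Bad orbT.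
apply: numeric => //; first exact: card_ct.
have := @small_bound (vec k) ((2 ^ k) %/ 3); rewrite card_vec; apply.
exact: leq_div.
Qed.

Lemma good_tree k (A : {set vec k}) (t : dtree (vec k)) :
  (depth t <= (k.-1) %/ 8) -> #|A| = (2 ^ k)./2 ->
  (2 ^ k + 6 * #|[set y | (y \in ~:A) && run t (hadamard y)]|
          <= 6 * #|[set y | (y \in A) && run t (hadamard y)]|) ->
  A \in Bad k.
Proof.
move=> hd hA h.
have [c hc] := dtree_to_ctree hd.
rewrite inE; apply/existsP; exists c.
set S := cacc c.
have e1 : [set y | (y \in A) && run t (hadamard y)] = A :&: S.
  by apply/setP => y; rewrite !inE hc.
have e2 : [set y | (y \in ~:A) && run t (hadamard y)] = S :\: A.
  by apply/setP => y; rewrite !inE hc andbC.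
rewrite e1 e2 in h.
have := cardsID S A; have := cardsU (A :\: S) (S :\: A); rewrite /symd.
have := odd_double_half (2 ^ k).
lia.
Qed.

Lemma has_ex (X : Type) (P : pred X) s : has P s -> exists x, P x.
Proof. elim: s => //= x s IH /orP[h|h]; [by exists x | exact: IH]. Qed.

Unset Implicit Arguments.
Local Open Scope ring_scope.

Theorem lemma3p3 (R : realType) :
  exists c : R, 0 < c /\
  forall delta : R, 0 < delta ->
  exists K : nat, forall k : nat, (K <= k)%N ->
  exists Bad : {set {set vec k}},
    (#|Bad|%:R <= delta * #|[set A : {set vec k} | #|A| == (2 ^ k)./2]|%:R) /\
    forall A : {set vec k}, #|A| = (2 ^ k)./2 -> A \notin Bad ->
    forall T : prob_alg R (vec k),
      is_tester (PA A) (1 / 3 : R) T -> c * k%:R <= (query_cplx T)%:R.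
Proof.
exists (1 / 8); split; first lra.
move=> delta d0.
set M := (Num.Def.archi_bound delta^-1).+1.
have hM : delta^-1 <= M%:R.
  apply: ltW; apply: lt_trans (archi_boundP _) _; first by rewrite invr_ge0 ltW.
  by rewrite ltr_nat.
exists (maxn 40 M) => k hk.
have hk40 : (40 <= k)%N by move: hk; rewrite geq_max => /andP[].
have hMk : (0 < M <= k)%N by move: hk; rewrite geq_max => /andP[_ ->].
exists (Bad k); split.
  rewrite card_draws card_vec.
  have hb := bad_count hk40 hMk.
  have : (M%:R : R) * #|Bad k|%:R <= 'C(2 ^ k, (2 ^ k)./2)%:R.
    by rewrite -natrM ler_nat.
  have hM' : 1 <= delta * M%:R.
    have := ler_wpM2l (ltW d0) hM; by rewrite mulfV ?lt0r_neq0.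
  have Y0 : (0 : R) <= #|Bad k|%:R by rewrite ler0n.
  move: hM' Y0; move: (M%:R : R) (#|Bad k|%:R : R) ('C(2 ^ k, (2 ^ k)./2)%:R : R).
  move=> X Y Z h1 h2 h3.
  nra.
move=> A hA hnot T hT; rewrite leNgt; apply/negP => hlt.
have k0 : (0 < k)%N by apply: leq_trans hk40.
have hq : (query_cplx T <= (k.-1) %/ 8)%N.
  have : (8 * query_cplx T < k)%N.
    rewrite -(ltr_nat R) natrM; move: hlt.
    move: ((query_cplx T)%:R : R) (k%:R : R) => X Y h; lra.
  lia.
have [p /andP[h1 h2]] := has_ex (tester_tree k0 hA hT).
by move/negP: hnot; apply; apply: (good_tree (t := p.2)) => //; apply: leq_trans hq.
Qed.
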